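(* The set $T$ is good and full.
   Context: Let $X_1,X_2,X_3$ be pairwise disjoint nonempty sets and $\Omega=X_1\times X_2\times X_3$, with projections $\Pi_i:\Omega\to X_i$. For $S\subset\Omega$, the coordinates of $S$ are the elements of $\Pi_1S\cup\Pi_2S\cup\Pi_3S$. A set $S\subset\Omega$ is good if every function $f:S\to\mathbb C$ can be written $f(w_1,w_2,w_3)=u_1(w_1)+u_2(w_2)+u_3(w_3)$ for all $(w_1,w_2,w_3)\in S$, for some functions $u_i:X_i\to\mathbb C$. A set $S$ is full if it is a maximal good subset of $\Pi_1S\times\Pi_2S\times\Pi_3S$. Construction: fix pairwise distinct elements $x_1,y_1,\alpha_{5k-4},\alpha_{5k-1}$ ($k\ge1$) of $X_1$; pairwise distinct elements $x_2,y_2,\alpha_{5k-3},\alpha_{5k}$ ($k\ge1$) of $X_2$; pairwise distinct elements $x_3,z_3,\alpha_{5k-2}$ ($k\ge1$) of $X_3$. Set the convention $\alpha_{-3}:=y_2$, $\alpha_{-2}:=z_3$. Define $a_1=(x_1,x_2,x_3)$, $a_2=(y_1,y_2,x_3)$, $a_3=(y_1,x_2,z_3)$ and for $n\ge1$: $a_{5n-1}=(\alpha_{5n-4},\alpha_{5n-3},\alpha_{5n-2})$, $a_{5n}=(\alpha_{5n-1},\alpha_{5n},\alpha_{5n-2})$, $a_{5n+1}=(\alpha_{5n-4},\alpha_{5n},\alpha_{5n-7})$, $a_{5n+2}=(\alpha_{5n-1},\alpha_{5n-3},x_3)$, $a_{5n+3}=(x_1,\alpha_{5n-8},\alpha_{5n-2})$.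 Let $T=\{a_i:i\ge1\}$. *)

(* Defs.v *)
(* Stdlib (classical reals).  Complex numbers are modelled as R*R with
   componentwise addition: the notion "good" only uses the additive group of C. *)
From Stdlib Require Import Reals Arith.
Open Scope R_scope.

Definition CC : Type := (R * R)%type.
Definition Cadd (z w : CC) : CC := (fst z + fst w, snd z + snd w).

Section Defs.
Variables X1 X2 X3 : Type.
Definition Omega : Type := (X1 * X2 * X3)%type.
Definition p1 (w : Omega) : X1 := fst (fst w).
Definition p2 (w : Omega) : X2 := snd (fst w).
Definition p3 (w : Omega) : X3 := snd w.

Definition good (S : Omega -> Prop) : Prop :=
  forall f : {w : Omega | S w} -> CC,
    exists (u1 : X1 -> CC) (u2 : X2 -> CC) (u3 : X3 -> CC),
      forall w : {w : Omega | S w},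
        f w = Cadd (Cadd (u1 (p1 (proj1_sig w))) (u2 (p2 (proj1_sig w))))
                   (u3 (p3 (proj1_sig w))).

Definition box (S : Omega -> Prop) (w : Omega) : Prop :=
  (exists v, S v /\ p1 v = p1 w) /\ (exists v, S v /\ p2 v = p2 w) /\
  (exists v, S v /\ p3 v = p3 w).

Definition full (S : Omega -> Prop) : Prop :=
  good S /\
  forall S' : Omega -> Prop,
    (forall w, S w -> S' w) -> (forall w, S' w -> box S w) -> good S' ->
    forall w, S' w -> S w.
End Defs.

Definition distinct_fam {X : Type} (x y : X) (al be : nat -> X) : Prop :=
  x <> y /\
  (forall k, (1 <= k)%nat -> al k <> x /\ al k <> y /\ be k <> x /\ be k <> y) /\
  (forall k l, (1 <= k)%nat -> (1 <= l)%nat ->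
     (al k = al l -> k = l) /\ (be k = be l -> k = l) /\ al k <> be l).

(* Encoding of the alpha's (k >= 1):
   a k = alpha_{5k-4}, b k = alpha_{5k-1}   (in X1)
   c k = alpha_{5k-3}, d k = alpha_{5k}     (in X2)
   e k = alpha_{5k-2}                        (in X3)
   conventions alpha_{-3} := y2, alpha_{-2} := z3, i.e. index k = 0: *)
Definition cconv {X2 : Type} (y2 : X2) (c : nat -> X2) (k : nat) : X2 :=
  if Nat.eqb k 0 then y2 else c k.
Definition econv {X3 : Type} (z3 : X3) (e : nat -> X3) (k : nat) : X3 :=
  if Nat.eqb k 0 then z3 else e k.

(* The set T = { a_i : i >= 1 } *)
Definition Tset {X1 X2 X3 : Type} (x1 y1 : X1) (a b : nat -> X1)
  (x2 y2 : X2) (c d : nat -> X2) (x3 z3 : X3) (e : nat -> X3)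
  (w : Omega X1 X2 X3) : Prop :=
  w = (x1, x2, x3) \/                                    (* a_1 *)
  w = (y1, y2, x3) \/                                    (* a_2 *)
  w = (y1, x2, z3) \/                                    (* a_3 *)
  exists n : nat, (1 <= n)%nat /\
    ( w = (a n, c n, e n)                                (* a_{5n-1} *)
   \/ w = (b n, d n, e n)                                (* a_{5n}   *)
   \/ w = (a n, d n, econv z3 e (n - 1))                 (* a_{5n+1} *)
   \/ w = (b n, c n, x3)                                 (* a_{5n+2} *)
   \/ w = (x1, cconv y2 c (n - 1), e n) ).               (* a_{5n+3} *)

(* Main.v *)
Require Import Defs.
From Stdlib Require Import Reals Arith Lra Lia Classical ClassicalEpsilon ProofIrrelevance.
Open Scope R_scope.

Definition Rr (P1 : R) (F1 F2 F3 F4 F5 : nat -> R) (m : nat) : R :=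
  2 * F5 m - P1 - (F1 m + F2 m - F3 m - F4 m).

Fixpoint st (P1 P2 P3 : R) (F1 F2 F3 F4 F5 : nat -> R) (n : nat) : R * R :=
  match n with
  | O => let s := (2*(P2-P1) + P3 - Rr P1 F1 F2 F3 F4 F5 1)/3 in (P2 - P1 - s, P3 - s)
  | S k => let E := F5 (S k) - fst (st P1 P2 P3 F1 F2 F3 F4 F5 k) in
           ((Rr P1 F1 F2 F3 F4 F5 (S (S k)) - E)/2, E)
  end.

Lemma st_inv P1 P2 P3 F1 F2 F3 F4 F5 n :
  2 * fst (st P1 P2 P3 F1 F2 F3 F4 F5 n) + snd (st P1 P2 P3 F1 F2 F3 F4 F5 n)
  = Rr P1 F1 F2 F3 F4 F5 (S n).
Proof. destruct n; cbn [st fst snd]; field. Qed.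

Lemma solve (P1 P2 P3 : R) (F1 F2 F3 F4 F5 : nat -> R) :
  exists (vy1 : R) (va vb vc vd ve : nat -> R),
    vy1 + vc O + P1 = P2 /\ vy1 + 0 + ve O = P3 /\
    forall n, (1 <= n)%nat ->
      va n + vc n + ve n = F1 n /\ vb n + vd n + ve n = F2 n /\
      va n + vd n + ve (n-1)%nat = F3 n /\ vb n + vc n + P1 = F4 n /\
      0 + vc (n-1)%nat + ve n = F5 n.
Proof.
  exists ((2*(P2-P1) + P3 - Rr P1 F1 F2 F3 F4 F5 1)/3),
    (fun n => F1 n - snd (st P1 P2 P3 F1 F2 F3 F4 F5 n) - fst (st P1 P2 P3 F1 F2 F3 F4 F5 n)),
    (fun n => F4 n - P1 - fst (st P1 P2 P3 F1 F2 F3 F4 F5 n)),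
    (fun n => fst (st P1 P2 P3 F1 F2 F3 F4 F5 n)),
    (fun n => F3 n - snd (st P1 P2 P3 F1 F2 F3 F4 F5 (n-1)%nat)
              - (F1 n - snd (st P1 P2 P3 F1 F2 F3 F4 F5 n) - fst (st P1 P2 P3 F1 F2 F3 F4 F5 n))),
    (fun n => snd (st P1 P2 P3 F1 F2 F3 F4 F5 n)).
  split; [|split].
  - cbn [st fst]. lra.
  - cbn [st snd]. lra.
  - intros n Hn. destruct n as [|m]; [lia|].
    replace (S m - 1)%nat with m by lia.
    pose proof (st_inv P1 P2 P3 F1 F2 F3 F4 F5 m) as Hi.
    assert (Hv : snd (st P1 P2 P3 F1 F2 F3 F4 F5 (S m)) =
                 F5 (S m) - fst (st P1 P2 P3 F1 F2 F3 F4 F5 m)) by reflexivity.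
    unfold Rr in Hi. lra.
Qed.

Lemma homog (vx1 vy1 vx2 vx3 : R) (va vb vc vd ve : nat -> R) :
  vx1 + vx2 + vx3 = 0 -> vy1 + vc O + vx3 = 0 -> vy1 + vx2 + ve O = 0 ->
  (forall n, (1 <= n)%nat ->
      va n + vc n + ve n = 0 /\ vb n + vd n + ve n = 0 /\
      va n + vd n + ve (n-1)%nat = 0 /\ vb n + vc n + vx3 = 0 /\
      vx1 + vc (n-1)%nat + ve n = 0) ->
  vy1 = vx1 /\ (forall n, ve n = vx3) /\ (forall n, vc n = vx2) /\
  (forall n, (1<=n)%nat -> va n = vx1 /\ vb n = vx1 /\ vd n = vx2).
Proof.
  intros h1 h2 h3 H.
  assert (Hy : vy1 = vx1).
  { destruct (H 1%nat (le_n 1)) as (e1&e2&e3&e4&e5). simpl in e3, e5. lra. }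
  assert (He : forall n, ve n = vx3).
  { induction n as [|m IH]. - lra.
    - destruct (H (S m) ltac:(lia)) as (e1&e2&e3&e4&e5).
      replace (S m - 1)%nat with m in * by lia. lra. }
  assert (Hc : forall n, vc n = vx2).
  { intro n. destruct (H (S n) ltac:(lia)) as (e1&e2&e3&e4&e5).
    replace (S n - 1)%nat with n in * by lia. pose proof (He (S n)). lra. }
  split; [exact Hy|]. split; [exact He|]. split; [exact Hc|].
  intros n Hn. destruct (H n Hn) as (e1&e2&e3&e4&e5).
  pose proof (He n). pose proof (He (n-1)%nat). pose proof (Hc n). lra.
Qed.

Lemma interp2 {X : Type} (x y : X) (al be : nat -> X) (H : distinct_fam x y al be)
  (vx vy : CC) (va vb : nat -> CC) :
  exists u : X -> CC, u x = vx /\ u y = vy /\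
    forall n, (1 <= n)%nat -> u (al n) = va n /\ u (be n) = vb n.
Proof.
  destruct H as (Hxy & Hk & Hkl).
  assert (Hex : forall p : X, exists v : CC,
     (p = x -> v = vx) /\ (p = y -> v = vy) /\
     (forall n, (1<=n)%nat -> p = al n -> v = va n) /\
     (forall n, (1<=n)%nat -> p = be n -> v = vb n)).
  { intro p.
    destruct (classic (p = x)) as [Hp|Hp].
    { exists vx. subst p. split; [auto|]. split; [intro; congruence|].
      split; intros n hn E; destruct (Hk n hn) as (h1&h2&h3&h4); congruence. }
    destruct (classic (p = y)) as [Hq|Hq].
    { exists vy. subst p. split; [intro; congruence|]. split; [auto|].
      split; intros n hn E; destruct (Hk n hn) as (h1&h2&h3&h4); congruence. }
    destruct (classic (exists n, (1<=n)%nat /\ al n = p)) as [[n [hn E]]|Hna].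
    { exists (va n). split; [intro; congruence|]. split; [intro; congruence|].
      split; intros m hm E'.
      - destruct (Hkl n m hn hm) as (k1&k2&k3). rewrite (k1 ltac:(congruence)). reflexivity.
      - destruct (Hkl n m hn hm) as (k1&k2&k3). exfalso; apply k3; congruence. }
    destruct (classic (exists n, (1<=n)%nat /\ be n = p)) as [[n [hn E]]|Hnb].
    { exists (vb n). split; [intro; congruence|]. split; [intro; congruence|].
      split; intros m hm E'.
      - destruct (Hkl m n hm hn) as (k1&k2&k3). exfalso; apply k3; congruence.
      - destruct (Hkl n m hn hm) as (k1&k2&k3). rewrite (k2 ltac:(congruence)). reflexivity. }
    exists vx. split; [intro; congruence|]. split; [intro; congruence|].
    split; intros m hm E'; exfalso; [apply Hna|apply Hnb]; exists m; auto. }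
  destruct (choice _ Hex) as [u Hu].
  exists u. split; [apply (Hu x); auto|]. split; [apply (Hu y); auto|].
  intros n hn. split; [apply (proj1 (proj2 (proj2 (Hu (al n))))) | apply (proj2 (proj2 (proj2 (Hu (be n)))))]; auto.
Qed.

Lemma interp3 {X : Type} (x z : X) (e : nat -> X)
  (H : x <> z /\ (forall k, (1 <= k)%nat -> e k <> x /\ e k <> z) /\
        (forall k l, (1 <= k)%nat -> (1 <= l)%nat -> e k = e l -> k = l))
  (vx vz : CC) (ve : nat -> CC) :
  exists u : X -> CC, u x = vx /\ u z = vz /\
    forall n, (1 <= n)%nat -> u (e n) = ve n.
Proof.
  destruct H as (Hxz & Hk & Hkl).
  assert (Hex : forall p : X, exists v : CC,
     (p = x -> v = vx) /\ (p = z -> v = vz) /\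
     (forall n, (1<=n)%nat -> p = e n -> v = ve n)).
  { intro p.
    destruct (classic (p = x)) as [Hp|Hp].
    { exists vx. subst p. split; [auto|]. split; [intro; congruence|].
      intros n hn E; destruct (Hk n hn) as (h1&h2); congruence. }
    destruct (classic (p = z)) as [Hq|Hq].
    { exists vz. subst p. split; [intro; congruence|]. split; [auto|].
      intros n hn E; destruct (Hk n hn) as (h1&h2); congruence. }
    destruct (classic (exists n, (1<=n)%nat /\ e n = p)) as [[n [hn E]]|Hna].
    { exists (ve n). split; [intro; congruence|]. split; [intro; congruence|].
      intros m hm E'. rewrite (Hkl n m hn hm ltac:(congruence)). reflexivity. }
    exists vx. split; [intro; congruence|]. split; [intro; congruence|].
    intros m hm E'; exfalso; apply Hna; exists m; auto. }
  destruct (choice _ Hex) as [u Hu].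
  exists u. split; [apply (Hu x); auto|]. split; [apply (Hu z); auto|].
  intros n hn. apply (proj2 (proj2 (Hu (e n)))); auto.
Qed.

Definition gext {A : Type} (P : A -> Prop) (f : {w : A | P w} -> CC) (w : A) : CC :=
  match excluded_middle_informative (P w) with
  | left H => f (exist _ w H) | right _ => (0,0) end.

Lemma gext_spec {A : Type} (P : A -> Prop) (f : {w : A | P w} -> CC) (w : {w : A | P w}) :
  f w = gext P f (proj1_sig w).
Proof.
  destruct w as [w0 Hw]. unfold gext; simpl.
  destruct (excluded_middle_informative (P w0)) as [H|H].
  - rewrite (proof_irrelevance _ H Hw). reflexivity.
  - contradiction.
Qed.

Lemma pair_eta (z : CC) r s : fst z = r -> snd z = s -> z = (r, s).
Proof. destruct z; simpl; intros; subst; reflexivity. Qed.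

Lemma cconv_S {X : Type} (y : X) (c : nat -> X) n : (1 <= n)%nat -> cconv y c n = c n.
Proof. intro H. unfold cconv. destruct (Nat.eqb n 0) eqn:E; auto. apply Nat.eqb_eq in E; lia. Qed.

Lemma econv_S {X : Type} (y : X) (c : nat -> X) n : (1 <= n)%nat -> econv y c n = c n.
Proof. intro H. unfold econv. destruct (Nat.eqb n 0) eqn:E; auto. apply Nat.eqb_eq in E; lia. Qed.

Lemma good_T (X1 X2 X3 : Type)
  (x1 y1 : X1) (a b : nat -> X1)
  (x2 y2 : X2) (c d : nat -> X2)
  (x3 z3 : X3) (e : nat -> X3)
  (H1 : distinct_fam x1 y1 a b)
  (H2 : distinct_fam x2 y2 c d)
  (H3 : x3 <> z3 /\ (forall k, (1 <= k)%nat -> e k <> x3 /\ e k <> z3) /\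
        (forall k l, (1 <= k)%nat -> (1 <= l)%nat -> e k = e l -> k = l)) :
  good X1 X2 X3 (Tset x1 y1 a b x2 y2 c d x3 z3 e).
Proof.
  intro f.
  pose (g := gext (Tset x1 y1 a b x2 y2 c d x3 z3 e) f).
  destruct (solve (fst (g (x1,x2,x3))) (fst (g (y1,y2,x3))) (fst (g (y1,x2,z3)))
     (fun n => fst (g (a n, c n, e n))) (fun n => fst (g (b n, d n, e n)))
     (fun n => fst (g (a n, d n, econv z3 e (n-1)))) (fun n => fst (g (b n, c n, x3)))
     (fun n => fst (g (x1, cconv y2 c (n-1), e n))))
    as (vy1 & va & vb & vc & vd & ve & Ha2 & Ha3 & Hblk).
  destruct (solve (snd (g (x1,x2,x3))) (snd (g (y1,y2,x3))) (snd (g (y1,x2,z3)))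
     (fun n => snd (g (a n, c n, e n))) (fun n => snd (g (b n, d n, e n)))
     (fun n => snd (g (a n, d n, econv z3 e (n-1)))) (fun n => snd (g (b n, c n, x3)))
     (fun n => snd (g (x1, cconv y2 c (n-1), e n))))
    as (wy1 & wa & wb & wc & wd & we & Wa2 & Wa3 & Wblk).
  destruct (interp2 x1 y1 a b H1 (0,0) (vy1,wy1) (fun n => (va n, wa n)) (fun n => (vb n, wb n)))
    as (u1 & U1x & U1y & U1n).
  destruct (interp2 x2 y2 c d H2 (0,0) (vc O, wc O) (fun n => (vc n, wc n)) (fun n => (vd n, wd n)))
    as (u2 & U2x & U2y & U2n).
  destruct (interp3 x3 z3 e H3 (fst (g (x1,x2,x3)), snd (g (x1,x2,x3))) (ve O, we O) (fun n => (ve n, we n)))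
    as (u3 & U3x & U3z & U3n).
  assert (U2c : forall k, u2 (cconv y2 c k) = (vc k, wc k)).
  { intro k; unfold cconv; destruct (Nat.eqb k 0) eqn:Ek.
    - apply Nat.eqb_eq in Ek; subst; exact U2y.
    - apply Nat.eqb_neq in Ek. apply (U2n k ltac:(lia)). }
  assert (U3e : forall k, u3 (econv z3 e k) = (ve k, we k)).
  { intro k; unfold econv; destruct (Nat.eqb k 0) eqn:Ek.
    - apply Nat.eqb_eq in Ek; subst; exact U3z.
    - apply Nat.eqb_neq in Ek. apply (U3n k ltac:(lia)). }
  exists u1, u2, u3. intro w. rewrite gext_spec. fold g.
  destruct w as [w0 Hw]; simpl proj1_sig.
  destruct Hw as [E|[E|[E|[n [Hn [E|[E|[E|[E|E]]]]]]]]]; subst w0;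
    cbn [p1 p2 p3 fst snd];
    rewrite ?U1x, ?U1y, ?U2x, ?U2y, ?U3x, ?U3z, ?U2c, ?U3e;
    try (destruct (U1n n Hn) as [R1 R2]; rewrite ?R1, ?R2);
    try (destruct (U2n n Hn) as [R3 R4]; rewrite ?R3, ?R4);
    try (rewrite (U3n n Hn));
    unfold Cadd; cbn [fst snd]; apply pair_eta;
    try lra;
    destruct (Hblk n Hn) as (e1&e2&e3&e4&e5);
    destruct (Wblk n Hn) as (f1&f2&f3&f4&f5); cbv beta in *; lra.
Qed.

Lemma full_T (X1 X2 X3 : Type)
  (x1 y1 : X1) (a b : nat -> X1)
  (x2 y2 : X2) (c d : nat -> X2)
  (x3 z3 : X3) (e : nat -> X3) :
  forall S' : Omega X1 X2 X3 -> Prop,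
    (forall w, Tset x1 y1 a b x2 y2 c d x3 z3 e w -> S' w) ->
    (forall w, S' w -> box X1 X2 X3 (Tset x1 y1 a b x2 y2 c d x3 z3 e) w) ->
    good X1 X2 X3 S' ->
    forall w, S' w -> Tset x1 y1 a b x2 y2 c d x3 z3 e w.
Proof.
  intros S' Hsub Hbox Hgood w Hw.
  destruct (classic (Tset x1 y1 a b x2 y2 c d x3 z3 e w)) as [|Hn]; [assumption|exfalso].
  destruct (Hgood (fun v => if excluded_middle_informative
        (Tset x1 y1 a b x2 y2 c d x3 z3 e (proj1_sig v)) then ((0,0):CC) else ((1,0):CC)))
    as (u1&u2&u3&Hu).
  assert (HT : forall p q r, Tset x1 y1 a b x2 y2 c d x3 z3 e (p,q,r) ->
             fst (u1 p) + fst (u2 q) + fst (u3 r) = 0).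
  { intros p q r Ht. specialize (Hu (exist _ (p,q,r) (Hsub _ Ht))).
    cbn [proj1_sig p1 p2 p3 fst snd] in Hu.
    destruct (excluded_middle_informative _) as [_|C]; [|contradiction].
    apply (f_equal fst) in Hu. unfold Cadd in Hu. cbn [fst snd] in Hu. lra. }
  destruct (homog (fst (u1 x1)) (fst (u1 y1)) (fst (u2 x2)) (fst (u3 x3))
     (fun n => fst (u1 (a n))) (fun n => fst (u1 (b n))) (fun n => fst (u2 (cconv y2 c n)))
     (fun n => fst (u2 (d n))) (fun n => fst (u3 (econv z3 e n)))) as (Hy & He & Hc & Hab).
  - apply HT; left; reflexivity.
  - cbv beta. apply HT. right; left. reflexivity.
  - cbv beta. apply HT. right; right; left. reflexivity.
  - intros n Hn1. cbv beta. rewrite (cconv_S y2 c n Hn1), (econv_S z3 e n Hn1).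
    split; [|split; [|split; [|split]]]; apply HT; right; right; right; exists n; split; auto.
  - cbv beta in *.
    assert (Q1 : fst (u1 (p1 X1 X2 X3 w)) = fst (u1 x1)).
    { destruct (Hbox w Hw) as ([v [Hv E]] & _ & _). rewrite <- E.
      destruct Hv as [E'|[E'|[E'|[n [Hn' [E'|[E'|[E'|[E'|E']]]]]]]]]; subst v;
        cbn [p1 p2 p3 fst snd]; auto; apply Hab; auto. }
    assert (Q2 : fst (u2 (p2 X1 X2 X3 w)) = fst (u2 x2)).
    { destruct (Hbox w Hw) as (_ & [v [Hv E]] & _). rewrite <- E.
      destruct Hv as [E'|[E'|[E'|[n [Hn' [E'|[E'|[E'|[E'|E']]]]]]]]]; subst v;
        cbn [p1 p2 p3 fst snd]; auto;
        try (rewrite <- (cconv_S y2 c n Hn'); now apply Hc);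
        try (apply Hab; auto).
      - apply (Hc O). }
    assert (Q3 : fst (u3 (p3 X1 X2 X3 w)) = fst (u3 x3)).
    { destruct (Hbox w Hw) as (_ & _ & [v [Hv E]]). rewrite <- E.
      destruct Hv as [E'|[E'|[E'|[n [Hn' [E'|[E'|[E'|[E'|E']]]]]]]]]; subst v;
        cbn [p1 p2 p3 fst snd]; auto;
        try (rewrite <- (econv_S z3 e n Hn'); now apply He).
      - apply (He O). }
    pose proof (HT x1 x2 x3 (or_introl eq_refl)) as H0.
    specialize (Hu (exist _ w Hw)). cbn [proj1_sig] in Hu.
    destruct (excluded_middle_informative _) as [C|_]; [contradiction|].
    apply (f_equal fst) in Hu. unfold Cadd in Hu. cbn [fst snd] in Hu. lra.
Qed.

Theorem mainTheorem3 (X1 X2 X3 : Type)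
  (x1 y1 : X1) (a b : nat -> X1)
  (x2 y2 : X2) (c d : nat -> X2)
  (x3 z3 : X3) (e : nat -> X3)
  (H1 : distinct_fam x1 y1 a b)
  (H2 : distinct_fam x2 y2 c d)
  (H3 : x3 <> z3 /\ (forall k, (1 <= k)%nat -> e k <> x3 /\ e k <> z3) /\
        (forall k l, (1 <= k)%nat -> (1 <= l)%nat -> e k = e l -> k = l)) :
  good X1 X2 X3 (Tset x1 y1 a b x2 y2 c d x3 z3 e) /\
  full X1 X2 X3 (Tset x1 y1 a b x2 y2 c d x3 z3 e).
Proof.
  pose proof (good_T X1 X2 X3 x1 y1 a b x2 y2 c d x3 z3 e H1 H2 H3) as G.
  split; [exact G|]. split; [exact G|].
  apply full_T.
Qed.
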